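(* Let $\gamma$ be a separating simple closed curve on a surface $\Sigma$, let $\Sigma'\to\Sigma$ be a finite-sheeted abelian (regular) covering to which $\gamma$ lifts to a closed curve, and let $\gamma'$ be a lift of $\gamma$ to $\Sigma'$. If $\gamma'$ is separating, then the restriction of the covering map $\Sigma'\to\Sigma$ to some component of $\Sigma'\smallsetminus\gamma'$ is a homeomorphism onto its image.
   Context: An abelian covering is a regular covering whose group of deck transformations is abelian. *)

(* Defs.v *)
From HB Require Import structures.
From mathcomp Require Import all_boot all_order all_algebra.
From mathcomp Require Import all_classical all_reals all_analysis.
Set Implicit Arguments. Unset Strict Implicit. Unset Printing Implicit Defensive.
Import Order.TTheory GRing.Theory Num.Theory.
Import numFieldNormedType.Exports.
Local Open Scope classical_set_scope.
Local Open Scope ring_scope.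

(* f restricted to A is a homeomorphism onto its image f @` A
   (image carrying the subspace topology). *)
Definition homeo_onto_image {X Y : topologicalType} (f : X -> Y) (A : set X) :=
  [/\ {within A, continuous f},
      {in A &, injective f} &
      forall V : set X, open V ->
        exists W : set Y, open W /\ f @` (A `&` V) = f @` A `&` W].

Definition is_surface (R : realType) (S : topologicalType) :=
  [/\ hausdorff_space S, connected [set: S] &
      forall x : S, exists U : set S, [/\ open U, U x &
        exists f : S -> R * R, homeo_onto_image f U /\ open (f @` U)]].

Definition closed_curve (R : realType) (S : topologicalType) (g : R -> S) :=
  continuous g /\ forall t : R, g (t + 1) = g t.

(* A simple closed curve: closed curve whose parametrization is injective
   modulo 1, i.e. an embedding of the circle R/Z. *)
Definition simple_closed_curve (R : realType) (S : topologicalType) (g : R -> S) :=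
  closed_curve g /\
  forall s t : R, g s = g t -> exists k : int, s - t = k%:~R.

Definition separating (R : realType) (S : topologicalType) (g : R -> S) :=
  ~ connected (~` range g).

Definition covering_map {X Y : topologicalType} (p : X -> Y) :=
  [/\ continuous p, (forall y : Y, exists x : X, p x = y) &
      forall y : Y, exists U : set Y, [/\ open U, U y &
        exists (I : Type) (V : I -> set X),
          [/\ forall i, open (V i),
              forall i j, i <> j -> V i `&` V j = set0,
              p @^-1` U = \bigcup_i V i &
              forall i, homeo_onto_image p (V i) /\ p @` V i = U]]].

Definition finite_sheeted {X Y : topologicalType} (p : X -> Y) :=
  forall y : Y, finite_set (p @^-1` [set y]).

Definition deck {X Y : topologicalType} (p : X -> Y) (h : X -> X) :=
  [/\ continuous h,
      exists g : X -> X, [/\ continuous g, cancel h g & cancel g h] &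
      p \o h = p].

Definition regular_covering {X Y : topologicalType} (p : X -> Y) :=
  covering_map p /\
  forall x1 x2 : X, p x1 = p x2 -> exists h, deck p h /\ h x1 = x2.

Definition abelian_covering {X Y : topologicalType} (p : X -> Y) :=
  regular_covering p /\
  forall h1 h2, deck p h1 -> deck p h2 -> h1 \o h2 = h2 \o h1.

(* Main.v *)
Require Import Defs.
From HB Require Import structures.
From mathcomp Require Import all_boot all_order all_algebra.
From mathcomp Require Import all_classical all_reals all_analysis.
Set Implicit Arguments. Unset Strict Implicit. Unset Printing Implicit Defensive.
Import Order.TTheory GRing.Theory Num.Theory.
Import numFieldNormedType.Exports.
Local Open Scope classical_set_scope.
Local Open Scope ring_scope.


Definition sep {T : topologicalType} (L X Y : set T) :=
  [/\ open X /\ open Y, X !=set0, Y !=set0, X `&` Y = set0 & X `|` Y = ~` L].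

Lemma sep_sym {T : topologicalType} (L X Y : set T) : sep L X Y -> sep L Y X.
Proof. by case=> [[? ?] ? ? XY XYL]; split=> //; [rewrite setIC|rewrite setUC]. Qed.

Lemma sep_closure {T : topologicalType} (L X Y : set T) :
  sep L X Y -> closure X `<=` X `|` L.
Proof.
case=> [[oX oY] _ _ XY XYL] x cx.
have nY : ~ Y x.
  move=> Yx; have [z [Xz Yz]] := cx Y (open_nbhs_nbhs (conj oY Yx)).
  by have : (X `&` Y) z by []; rewrite XY.
have [Xx|nXx] := pselect (X x); first by left.
right; apply: contrapT => nL.
have : (X `|` Y) x by rewrite XYL.
by case.
Qed.

Lemma sep_disjL {T : topologicalType} (L X Y : set T) :
  sep L X Y -> X `&` L = set0.
Proof.
case=> _ _ _ _ XYL; apply/seteqP; split=> [x [Xx Lx]|//].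
have : (X `|` Y) x by left.
by rewrite XYL.
Qed.

Lemma sep_conn {T : topologicalType} (L X Y E : set T) :
  sep L X Y -> connected E -> E `&` L = set0 -> E `&` X !=set0 -> E `<=` X.
Proof.
move=> s cE EL EX.
have [[oX oY] _ _ XY XYL] := s.
have eq1 : E `&` X = E `&` ~` Y.
  apply/seteqP; split=> x [Ex H]; split=> //.
    by move=> Yx; have : (X `&` Y) x by []; rewrite XY.
  have : ~ L x by move=> Lx; have : (E `&` L) x by []; rewrite EL.
  rewrite -[~ L x]/((~` L) x) -XYL; case=> //.
have := cE (E `&` X) EX (ex_intro2 _ _ X oX erefl)
  (ex_intro2 _ _ (~` Y) (open_closedC oY) eq1).
by move=> <- x [].
Qed.

Lemma clopen_disj {T : topologicalType} (L1 X1 Y1 L2 X2 Y2 : set T) :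
  connected [set: T] -> sep L1 X1 Y1 -> sep L2 X2 Y2 ->
  X1 `&` L2 = set0 -> X2 `&` L1 = set0 -> L1 `&` L2 = set0 -> L1 !=set0 ->
  X1 `&` X2 = set0.
Proof.
move=> cT s1 s2 XL2 XL1 LL [l Ll].
apply: contrapT => /eqP/set0P ne.
have oT : open (X1 `&` X2) by apply: openI; [case: s1 => -[]|case: s2 => -[]].
have cl : closure (X1 `&` X2) `<=` X1 `&` X2.
  move=> x cx.
  have c1 : (X1 `|` L1) x by apply: (sep_closure s1); apply: (closureS _ cx) => ? [].
  have c2 : (X2 `|` L2) x by apply: (sep_closure s2); apply: (closureS _ cx) => ? [].
  case: c1 => H1; case: c2 => H2.
  - by [].
  - by have : (X1 `&` L2) x by []; rewrite XL2.
  - by have : (X2 `&` L1) x by []; rewrite XL1.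
  - by have : (L1 `&` L2) x by []; rewrite LL.
have eqc : X1 `&` X2 = setT `&` closure (X1 `&` X2).
  rewrite setTI; apply/seteqP; split=> //; exact: subset_closure.
have H := cT (X1 `&` X2) ne (ex_intro2 _ _ _ oT (esym (setTI _)))
   (ex_intro2 _ _ _ (@closed_closure _ (X1 `&` X2)) eqc).

have : (X1 `&` X2) l by rewrite H.
case=> X1l _.
by have : (X1 `&` L1) l by []; rewrite (sep_disjL s1).
Qed.

Lemma per_nat (R : realType) (T : topologicalType) (f : R -> T) :
  (forall t, f (t + 1) = f t) -> forall (n : nat) t, f (t + n%:R) = f t.
Proof.
move=> P; elim=> [|n IH] t; first by rewrite addr0.
by rewrite -addn1 natrD addrA P IH.
Qed.

Lemma per_int (R : realType) (T : topologicalType) (f : R -> T) :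
  (forall t, f (t + 1) = f t) -> forall (k : int) t, f (t + k%:~R) = f t.
Proof.
move=> P [n|n] t; first by rewrite (per_nat P).
have H := per_nat P n.+1 (t - n.+1%:R); rewrite subrK in H.
rewrite NegzE mulrNz; exact: (esym H).
Qed.

Lemma range_periodic (R : realType) (T : topologicalType) (f : R -> T) :
  (forall t, f (t + 1) = f t) -> range f = f @` `[0, 1].
Proof.
move=> P; apply/seteqP; split=> y [t Ht <-]; last by exists t.
exists (t - (Num.floor t)%:~R).
  have := floor_itv t; rewrite /= in_itv /= => /andP[h1 h2].
  rewrite subr_ge0 h1 /= lerBlDl.
  apply: ltW; apply: (lt_le_trans h2); rewrite rmorphD /=; done.
have := per_int P (- Num.floor t) t; by rewrite mulrNz.
Qed.

Lemma range_closed (R : realType) (T : topologicalType) (f : R -> T) :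
  hausdorff_space T -> closed_curve f -> closed (range f).
Proof.
move=> hT [cf P]; rewrite (range_periodic P).
apply: compact_closed => //; apply: continuous_compact.
  exact: continuous_subspaceT.
exact: segment_compact.
Qed.


Lemma nbhs_open_sub {T : topologicalType} (x : T) (A B : set T) :
  open A -> A x -> A `<=` B -> nbhs x B.
Proof. by move=> oA Ax AB; rewrite nbhsE; exists A. Qed.

Lemma open_by_nbhs {T : topologicalType} (O : set T) :
  (forall x, O x -> exists A, [/\ open A, A x & A `<=` O]) -> open O.
Proof.
move=> H; rewrite openE => x Ox; have [A [oA Ax AO]] := H x Ox.
exact: nbhs_open_sub oA Ax AO.
Qed.

Lemma covering_open {X Y : topologicalType} (p : X -> Y) :
  covering_map p -> forall O, open O -> open (p @` O).
Proof.
case=> cp sp ev O oO; apply: open_by_nbhs; move=> y [u Ou yE]; subst y.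
have [U [oU Upo [I [V [oV dV pre hV]]]]] := ev (p u).
have : (p @^-1` U) u by [].
rewrite pre => -[i _ Vio].
have [[_ _ hop] imV] := hV i.
have [W [oW eW]] := hop O oO.
exists (U `&` W); split.
- exact: openI.
- have : (p @` (V i `&` O)) (p u) by exists u.
  by rewrite eW imV.
- by rewrite -imV -eW => y [x [_ Ox] <-]; exists x.
Qed.

Lemma deck_agree {X Y : topologicalType} (p : X -> Y) (h k : X -> X) (z : X) :
  hausdorff_space X -> connected [set: X] -> covering_map p ->
  continuous h -> continuous k -> p \o h = p -> p \o k = p -> h z = k z ->
  forall w, h w = k w.
Proof.
move=> hX cX [cp sp ev] ch ck ph pk hzk.
set E := [set w | h w = k w].
have oE : open E.
  apply: open_by_nbhs; move=> w Ew.
  have [U [oU Upw [I [V [oV dV pre hV]]]]] := ev (p w).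
  have phw : p (h w) = p w := congr1 (fun f => f w) ph.
  have : (p @^-1` U) (h w) by rewrite /preimage /= phw.
  rewrite pre => -[j _ Vj].
  exists (h @^-1` V j `&` k @^-1` V j); split.
  - by apply: openI; apply/(continuousP _).1.
  - by split => //; rewrite /preimage /=; rewrite /E /= in Ew; rewrite -Ew.
  - move=> u [hu ku]; have [[_ inj _] _] := hV j.
    apply: inj; rewrite ?inE //.
    have e1 : p (h u) = p u := congr1 (fun f => f u) ph.
    have e2 : p (k u) = p u := congr1 (fun f => f u) pk.
    by rewrite e1 e2.
have cE : closed E.
  rewrite -openC; apply: open_by_nbhs; move=> w /= nE.
  move: hX; rewrite open_hausdorff => H.
  have : h w != k w by apply/eqP.
  move=> /H [[A B] /= [hA kB] [oA oB /eqP AB]].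
  exists (h @^-1` A `&` k @^-1` B); split.
  - by apply: openI; apply/(continuousP _).1.
  - by split; rewrite /preimage /=; apply/set_mem.
  - move=> u [hu ku] /= Eu.
    have : (A `&` B) (h u) by split => //; rewrite Eu.
    by rewrite AB.
have : E = setT.
  apply: cX.
  - by exists z.
  - by exists E => //; rewrite setTI.
  - by exists E => //; rewrite setTI.
by move=> EE w; have : E w by rewrite EE.
Qed.


Lemma range_connected (R : realType) (T : topologicalType) (f : R -> T) :
  closed_curve f -> connected (range f).
Proof.
move=> [cf P]; rewrite (range_periodic P).
apply: connected_continuous_connected; first exact: segment_connected.
exact: continuous_subspaceT.
Qed.

Lemma closed_curve_comp (R : realType) (T : topologicalType) (f : R -> T) (h : T -> T) :
  continuous h -> closed_curve f -> closed_curve (h \o f).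
Proof.
move=> ch [cf P]; split; last by move=> t /=; rewrite P.
by move=> t; apply: continuous_comp; [exact: cf|exact: ch].
Qed.

Lemma sep_pre {T : topologicalType} (f : T -> T) (L X Y : set T) :
  continuous f -> (forall y, exists x, f x = y) -> sep L X Y ->
  sep (f @^-1` L) (f @^-1` X) (f @^-1` Y).
Proof.
move=> cf sf [[oX oY] [x Xx] [y Yy] XY XYL]; split.
- by split; apply/(continuousP _).1.
- by have [x' ex] := sf x; exists x'; rewrite /preimage /= ex.
- by have [y' ey] := sf y; exists y'; rewrite /preimage /= ey.
- by rewrite -preimage_setI XY preimage_set0.
- by rewrite -preimage_setU XYL preimage_setC.
Qed.

Lemma deck_inv {X Y : topologicalType} (p : X -> Y) h :
  deck p h -> exists hi, [/\ deck p hi, cancel h hi & cancel hi h].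
Proof.
move=> [ch [hi [chi c1 c2]] ph]; exists hi; split => //.
split => //; first by exists h.
apply/funext => w /=.
have e : p (h (hi w)) = p (hi w) := congr1 (fun f => f (hi w)) ph.
by rewrite -e c2.
Qed.

Lemma deck_id {X Y : topologicalType} (p : X -> Y) : deck p id.
Proof.
have cid : continuous (@id X) by move=> ?.
by split => //; exists id.
Qed.

Lemma deck_p {X Y : topologicalType} (p : X -> Y) h w : deck p h -> p (h w) = p w.
Proof. by case=> _ _ ph; exact: (congr1 (fun f => f w) ph). Qed.


Lemma lift_eq (R : realType) (X Y : topologicalType) (g : R -> Y) (g' : R -> X) s t :
  (forall s t : R, g s = g t -> exists k : int, s - t = k%:~R) ->
  closed_curve g' -> g s = g t -> g' s = g' t.
Proof.
move=> sg [_ P] /sg [k e].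
by rewrite -(subrK t s) e addrC (per_int P).
Qed.

Lemma lifts_meet (R : realType) (X Y : topologicalType) (p : X -> Y)
  (g : R -> Y) (g' : R -> X) h k w :
  hausdorff_space X -> connected [set: X] -> covering_map p ->
  (forall s t : R, g s = g t -> exists k : int, s - t = k%:~R) ->
  closed_curve g' -> p \o g' = g -> deck p h -> deck p k ->
  range (h \o g') w -> range (k \o g') w -> forall v, h v = k v.
Proof.
move=> hX cX cov sg cg pg dh dk [a _ ea] [b _ eb].
have pa : p (g' a) = g a := congr1 (fun f => f a) pg.
have pb : p (g' b) = g b := congr1 (fun f => f b) pg.
have ea' : h (g' a) = w := ea.
have eb' : k (g' b) = w := eb.
have e1 : p (h (g' a)) = p (g' a) := deck_p _ dh.
have e2 : p (k (g' b)) = p (g' b) := deck_p _ dk.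
have gab : g a = g b by rewrite -pa -pb -e1 -e2 ea' eb'.
have e := lift_eq sg cg gab.
have [ch _ ph] := dh; have [ck _ pk] := dk.
apply: (deck_agree (p := p) (z := g' a)) => //.
by rewrite ea' e eb'.
Qed.

Lemma gamma_cover (R : realType) (X Y : topologicalType) (p : X -> Y)
  (g : R -> Y) (g' : R -> X) w :
  (forall x1 x2 : X, p x1 = p x2 -> exists h, deck p h /\ h x1 = x2) ->
  p \o g' = g -> range g (p w) -> exists h, deck p h /\ range (h \o g') w.
Proof.
move=> reg pg [t _ et].
have pt : p (g' t) = g t := congr1 (fun f => f t) pg.
have : p (g' t) = p w by rewrite pt et.
move=> /reg [h [dh eh]].
by exists h; split => //; exists t.
Qed.

Lemma count_lt {T : eqType} (a b : pred T) (s : seq T) :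
  (forall x, a x -> b x) -> (exists x, [/\ x \in s, b x & ~~ a x]) ->
  (count a s < count b s)%N.
Proof.
move=> ab [x [xs bx nax]]; elim: s xs => // y s IH.
rewrite inE => /orP [/eqP exy|xs] /=.
  subst y; rewrite (negbTE nax) bx add0n add1n ltnS.
  exact: sub_count.
have := IH xs; move: (ab y); case: (a y); case: (b y) => //= H lt;
  rewrite ?add1n ?add0n.
all: first [by have := H isT | by rewrite ltnS | by rewrite ltnS ltnW | done].
Qed.

Lemma pre_range {X : topologicalType} (R : realType) (g' : R -> X) (h hi : X -> X) :
  cancel h hi -> cancel hi h -> hi @^-1` range g' = range (h \o g').
Proof.
move=> c1 c2; apply/seteqP; split=> v.
  by move=> [t _ e]; exists t => //=; rewrite e c2.
by move=> [t _ <-]; exists t => //=; rewrite c1.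
Qed.

Lemma finish_sub {X : topologicalType} (L L2 Xs Ys Z Z' : set X) :
  connected [set: X] -> sep L Xs Ys -> sep L2 Z Z' -> L `<=` Z' ->
  L2 `<=` Xs -> L `&` L2 = set0 -> L2 !=set0 -> Z `<=` Xs.
Proof.
move=> cX sXY sZ LZ' L2X LL2 nL2.
have [_ _ _ ZZ' _] := sZ.
have ZL : Z `&` L = set0.
  apply/seteqP; split=> [v [Zv Lv]|//].
  have : (Z `&` Z') v by split => //; apply: LZ'.
  by rewrite ZZ'.
have YL2 : Ys `&` L2 = set0.
  apply/seteqP; split=> [v [Yv L2v]|//].
  have [_ _ _ XY _] := sXY.
  have : (Xs `&` Ys) v by split => //; apply: L2X.
  by rewrite XY.
have L2L : L2 `&` L = set0 by rewrite setIC.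
have ZY := clopen_disj cX sZ (sep_sym sXY) ZL YL2 L2L nL2.
move=> z Zz.
have nL : ~ L z by move=> Lz; have : (Z `&` L) z by []; rewrite ZL.
have [_ _ _ _ XYL] := sXY.
have : (Xs `|` Ys) z by rewrite XYL.
case=> // Yz.
by have : (Z `&` Ys) z by []; rewrite ZY.
Qed.


Lemma step (R : realType) (X Y : topologicalType) (p : X -> Y)
  (g : R -> Y) (g' : R -> X) (s : seq X) (P0 Q0 : set X) h (Xs Ys : set X) :
  hausdorff_space X -> connected [set: X] -> covering_map p ->
  (forall x1 x2 : X, p x1 = p x2 -> exists h, deck p h /\ h x1 = x2) ->
  (forall s t : R, g s = g t -> exists k : int, s - t = k%:~R) ->
  closed_curve g' -> p \o g' = g ->
  p @^-1` [set g 0] = [set` s] ->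
  sep (range g') P0 Q0 ->
  deck p h -> sep (range (h \o g')) Xs Ys ->
  Xs `&` (p @^-1` range g) !=set0 ->
  exists h2 Z Z', [/\ deck p h2, sep (range (h2 \o g')) Z Z' &
    (count (fun w => `[< Z w >]) s < count (fun w => `[< Xs w >]) s)%N].
Proof.
move=> hX cX cov reg sg cg pg Fb s0 dh sXY [w [Xw Gw]].
have [h2 [dh2 L2w]] := gamma_cover reg pg Gw.
set L := range (h \o g'); set L2 := range (h2 \o g').
have nXL := sep_disjL sXY.
have dLL : L `&` L2 = set0.
  apply/seteqP; split=> [v [Lv L2v]|//].
  have E := lifts_meet hX cX cov sg cg pg dh dh2 Lv L2v.
  case: L2w => t _ et; have : (Xs `&` L) w.
    by split => //; exists t => //; rewrite -et /= E.
  by rewrite nXL.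
have [ch2 _ _] := dh2; have [ch _ _] := dh.
have cL2 : connected L2 by apply: range_connected; apply: closed_curve_comp.
have cL : connected L by apply: range_connected; apply: closed_curve_comp.
have L2X : L2 `<=` Xs.
  apply: (sep_conn sXY cL2); first by rewrite setIC.
  by exists w.
have [hi2 [dhi2 c1 c2]] := deck_inv dh2.
have [chi2 _ _] := dhi2.
have s2 : sep L2 (hi2 @^-1` P0) (hi2 @^-1` Q0).
  rewrite /L2 -(pre_range g' c1 c2); apply: sep_pre => // y.
  by exists (h2 y); rewrite c1.
have nL2 : L2 !=set0 by exists (h2 (g' 0)); exists 0.
have [Z [Z' [sZ LZ']]] : exists Z Z', sep L2 Z Z' /\ L `<=` Z'.
  have Ll : L (h (g' 0)) by exists 0.
  have nL2l : ~ L2 (h (g' 0)).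
    by move=> H; have : (L `&` L2) (h (g' 0)) by []; rewrite dLL.
  have [_ _ _ _ U2] := s2.
  have : (hi2 @^-1` P0 `|` hi2 @^-1` Q0) (h (g' 0)) by rewrite U2.
  case=> H.
  - exists (hi2 @^-1` Q0), (hi2 @^-1` P0); split; first exact: sep_sym.
    apply: (sep_conn s2 cL dLL); by exists (h (g' 0)).
  - exists (hi2 @^-1` P0), (hi2 @^-1` Q0); split => //.
    apply: (sep_conn (sep_sym s2) cL dLL); by exists (h (g' 0)).
have ZX := finish_sub cX sXY sZ LZ' L2X dLL nL2.
exists h2, Z, Z'; split => //.
apply: count_lt.
  by move=> v /asboolP Zv; apply/asboolP; apply: ZX.
exists (h2 (g' 0)); split.
- have : [set` s] (h2 (g' 0)).
    rewrite -Fb /preimage /= (deck_p _ dh2).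
    exact: (congr1 (fun f => f 0) pg).
  by [].
- by apply/asboolP; apply: L2X; exists 0.
- apply/negP => /asboolP Zv.
  have : (Z `&` L2) (h2 (g' 0)) by split => //; exists 0.
  by rewrite (sep_disjL sZ).
Qed.


Lemma descent (R : realType) (X Y : topologicalType) (p : X -> Y)
  (g : R -> Y) (g' : R -> X) (s : seq X) (P0 Q0 : set X) :
  hausdorff_space X -> connected [set: X] -> covering_map p ->
  (forall x1 x2 : X, p x1 = p x2 -> exists h, deck p h /\ h x1 = x2) ->
  (forall s t : R, g s = g t -> exists k : int, s - t = k%:~R) ->
  closed_curve g' -> p \o g' = g ->
  p @^-1` [set g 0] = [set` s] ->
  sep (range g') P0 Q0 ->
  forall n h (Xs Ys : set X), deck p h -> sep (range (h \o g')) Xs Ys ->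
  (count (fun w => `[< Xs w >]) s <= n)%N ->
  exists h' X' Y', [/\ deck p h', sep (range (h' \o g')) X' Y' &
    X' `&` (p @^-1` range g) = set0].
Proof.
move=> hX cX cov reg sg cg pg Fb s0; elim=> [|n IH] h Xs Ys dh sXY hn.
  have [ne|e] := pselect (Xs `&` (p @^-1` range g) !=set0).
    have [h2 [Z [Z' [_ _ lt]]]] := step hX cX cov reg sg cg pg Fb s0 dh sXY ne.
    by move: (leq_trans lt hn).
  exists h, Xs, Ys; split => //.
  by apply/seteqP; split=> // v Hv; apply: e; exists v.
have [ne|e] := pselect (Xs `&` (p @^-1` range g) !=set0).
  have [h2 [Z [Z' [dh2 sZ lt]]]] := step hX cX cov reg sg cg pg Fb s0 dh sXY ne.
  apply: (IH h2 Z Z' dh2 sZ).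
  by rewrite -ltnS; apply: (leq_trans lt hn).
exists h, Xs, Ys; split => //.
by apply/seteqP; split=> // v Hv; apply: e; exists v.
Qed.

Lemma final (R : realType) (X Y : topologicalType) (p : X -> Y)
  (g : R -> Y) (g' : R -> X) (P Q : set X) :
  hausdorff_space X -> connected [set: X] -> covering_map p ->
  (forall x1 x2 : X, p x1 = p x2 -> exists h, deck p h /\ h x1 = x2) ->
  (forall s t : R, g s = g t -> exists k : int, s - t = k%:~R) ->
  closed_curve g' -> p \o g' = g ->
  sep (range g') P Q -> P `&` (p @^-1` range g) = set0 ->
  exists x : X, ~ range g' x /\
    homeo_onto_image p (connected_component (~` range g') x).
Proof.
move=> hX cX cov reg sg cg pg sPQ PG.
have [[oP _] [x Px] _ _ _] := sPQ.
have nPL := sep_disjL sPQ.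
have Gin : forall f v, deck p f -> (p @^-1` range g) v -> (p @^-1` range g) (f v).
  by move=> f v df; rewrite /preimage /= (deck_p _ df).
have LG : forall f v, deck p f -> range (f \o g') v -> (p @^-1` range g) v.
  move=> f v df [t _ <-]; rewrite /preimage /= (deck_p _ df).
  by exists t => //; exact: (esym (congr1 (fun f => f t) pg)).
have inj : forall x1 x2, P x1 -> P x2 -> p x1 = p x2 -> x1 = x2.
  move=> x1 x2 P1 P2 /reg [h [dh e]].
  have [ne|dis] := pselect (range (h \o g') `&` range g' !=set0).
    case: ne => v [Lv L0v].
    have L0v' : range (id \o g') v by [].
    by rewrite -e (lifts_meet hX cX cov sg cg pg dh (deck_id p) Lv L0v').
  have [hi [dhi c1 c2]] := deck_inv dh.
  have [chi _ _] := dhi.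
  have s2 : sep (range (h \o g')) (hi @^-1` P) (hi @^-1` Q).
    rewrite -(pre_range g' c1 c2); apply: sep_pre => // y.
    by exists (h y); rewrite c1.
  have H := clopen_disj cX sPQ s2.
  have : P `&` hi @^-1` P = set0.
    apply: H.
    - apply/seteqP; split=> [v [Pv Lv]|//].
      have : (P `&` (p @^-1` range g)) v by split => //; apply: (LG h).
      by rewrite PG.
    - apply/seteqP; split=> [v [Pv Lv]|//].
      have : (P `&` (p @^-1` range g)) (hi v).
        split => //; apply: (Gin _ _ dhi); apply: (LG id) => //; exact: deck_id.
      by rewrite PG.
    - apply/seteqP; split=> [v [L0v Lv]|//].
      by apply: dis; exists v.
    - by exists (g' 0); exists 0.
  move=> PP.
  have : (P `&` hi @^-1` P) x2 by split => //; rewrite /preimage /= -e c1.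
  by rewrite PP.
exists x; split.
  by move=> Lx; have : (P `&` range g') x by []; rewrite nPL.
set C := connected_component _ x.
have CP : C `<=` P.
  apply: (sep_conn sPQ); first exact: component_connected.
  - apply/seteqP; split=> [v [Cv Lv]|//].
    by have := connected_component_sub Cv.
  - exists x; split => //; apply: connected_component_refl.
    by move=> Lx; have : (P `&` range g') x by []; rewrite nPL.
have [cp _ _] := cov.
split.
- exact: continuous_subspaceT.
- move=> x1 x2 /set_mem C1 /set_mem C2; apply: inj; exact: CP.
- move=> V oV; exists (p @` (P `&` V)); split.
    by apply: (covering_open cov); apply: openI.
  apply/seteqP; split.
    move=> _ [c [Cc Vc] <-]; split; first by exists c.
    by exists c => //; split => //; apply: CP.
  move=> _ [[c Cc <-] [q [Pq Vq] e]].
  exists c => //; split => //.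
  by rewrite -(inj q c Pq (CP c Cc) e).
Qed.


Lemma sep_of_sep {T : topologicalType} (L : set T) :
  closed L -> ~ connected (~` L) -> exists P Q, sep L P Q.
Proof.
move=> cL /connectedPn [E [E0 EU [s1 s2]]].
have oA : open (~` L) by apply: closed_openC.
have EF : E false = ~` L `&` ~` closure (E true).
  apply/seteqP; split=> v.
    move=> Ev; split; first by rewrite EU; left.
    by move=> cv; have : (E false `&` closure (E true)) v by []; rewrite s2.
  move=> [Av ncv]; move: Av; rewrite EU; case=> // Et.
  by exfalso; apply: ncv; apply: subset_closure.
have ET : E true = ~` L `&` ~` closure (E false).
  apply/seteqP; split=> v.
    move=> Ev; split; first by rewrite EU; right.
    by move=> cv; have : (closure (E false) `&` E true) v by []; rewrite s1.
  move=> [Av ncv]; move: Av; rewrite EU; case=> // Et.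
  by exfalso; apply: ncv; apply: subset_closure.
exists (E false), (E true); split => //.
- split; [rewrite EF|rewrite ET]; apply: openI => //;
    apply: closed_openC; exact: closed_closure.
- apply/seteqP; split=> [v [Fv Tv]|//].
  have : (closure (E false) `&` E true) v by split => //; apply: subset_closure.
  by rewrite s1.
Qed.

Unset Implicit Arguments.
Theorem lemma3p4 (R : realType) (S S' : topologicalType) (p : S' -> S)
  (g : R -> S) (g' : R -> S') :
  is_surface R S -> is_surface R S' ->
  simple_closed_curve g -> separating g ->
  abelian_covering p -> finite_sheeted p ->
  closed_curve g' -> p \o g' = g ->
  separating g' ->
  exists x : S', ~ range g' x /\
    homeo_onto_image p (connected_component (~` range g') x).
Proof.
move=> _ [hX cX _] [_ sg] _ [[cov reg] _] fin cg pg sepg'.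
have [P0 [Q0 s0]] := sep_of_sep (range_closed hX cg) sepg'.
have [s Fb] : exists s : seq S', p @^-1` [set g 0] = [set` s].
  by apply/finite_seqP; apply: fin.
have [h' [X' [Y' [dh' sXY XG]]]] :=
  descent hX cX cov reg sg cg pg Fb s0 (deck_id p) s0 (leqnn _).
have [hi [dhi c1 c2]] := deck_inv dh'.
have [ch' _ _] := dh'.
have sP := sep_pre ch' (fun y => ex_intro _ (hi y) (c2 y)) sXY.
have eL : h' @^-1` range (h' \o g') = range g'.
  apply/seteqP; split=> v.
    by move=> [t _ e]; exists t => //; rewrite -(c1 v) -e /= c1.
  by move=> [t _ <-]; exists t.
rewrite eL in sP.
apply: (final hX cX cov reg sg cg pg sP).
apply/seteqP; split=> [v [Xv Gv]|//].
have : (X' `&` (p @^-1` range g)) (h' v).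
  by split => //; rewrite /preimage /= (deck_p _ dh').
by rewrite XG.
Qed.
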